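(* As formal power series in $y$, \[ \sum_{n\ge0}Q_n(x)y^n=\frac{2-y}{1-y-(x+1)y^2}+(1+x)y-1 . \]
   Context: For $n\ge1$ let $\Xi_n$ be the poset on $\{x_1,\dots,x_n\}$ whose cover relations are exactly: $x_2\prec x_1$, $x_3\prec x_2$, and for $3\le i\le n-1$, $x_i\prec x_{i+1}$ if $i$ is odd and $x_{i+1}\prec x_i$ if $i$ is even (so $x_1>x_2>x_3<x_4>x_5<\cdots$). A filter of a poset is an up-closed subset. The matchable Lucas cube $\Omega_n$ is the graph whose vertices are the filters of $\Xi_n$, two filters adjacent iff one is obtained from the other by deleting a single element; $\Omega_0$ is the one-vertex graph. $q_{n,k}$ denotes the number of induced subgraphs of $\Omega_n$ isomorphic to the $k$-dimensional hypercube, and $Q_n(x)=\sum_{k\ge0}q_{n,k}x^k$ is the cube polynomial of $\Omega_n$. *)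

(* Defs.v *)
From mathcomp Require Import all_boot all_order all_algebra.
Set Implicit Arguments. Unset Strict Implicit. Unset Printing Implicit Defensive.
Import GRing.Theory.

(* Element x_{i+1} of Xi_n is represented by i : 'I_n (0-based indices). *)

Definition xi_cover (n : nat) : rel 'I_n := fun a b =>
  [|| (a == 1 :> nat) && (b == 0 :> nat),
      (a == 2 :> nat) && (b == 1 :> nat),
      [&& 2 <= a, b == a.+1 :> nat & ~~ odd a]      (* 1-based i = a+1 odd: x_i ≺ x_{i+1} *)
    | [&& 2 <= b, a == b.+1 :> nat & odd b] ].      (* 1-based i = b+1 even: x_{i+1} ≺ x_i *)

Definition xi_le (n : nat) (a b : 'I_n) : bool := connect (@xi_cover n) a b.

Definition is_filter (n : nat) (F : {set 'I_n}) : bool :=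
  [forall a, forall b, (a \in F) && xi_le a b ==> (b \in F)].

Definition filters (n : nat) : {set {set 'I_n}} := [set F | is_filter F].

Definition omega_adj (n : nat) (F G : {set 'I_n}) : bool :=
  [exists x, (x \in F) && (G == F :\ x)] || [exists x, (x \in G) && (F == G :\ x)].

Definition cube_adj (k : nat) (u v : {set 'I_k}) : bool :=
  #|(u :\: v) :|: (v :\: u)| == 1.

Definition induces_cube (n k : nat) (S : {set {set 'I_n}}) : bool :=
  [exists f : {ffun {set 'I_k} -> {set 'I_n}},
    [&& injectiveb f, [set f u | u : {set 'I_k}] == S &
        [forall u, forall v, omega_adj (f u) (f v) == cube_adj u v]]].

Definition q (n k : nat) : nat :=
  #|[set S : {set {set 'I_n}} | (S \subset filters n) && induces_cube k S]|.

(* Cube polynomial Q_n(x) (q n k = 0 for k > n since 2^k <= #vertices <= 2^n). *)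
Definition cubeQ (n : nat) : {poly int} := (\poly_(k < n.+1) (q n k)%:R)%R.

(* Bivariate setting: outer variable y = 'X in {poly {poly int}},
   inner variable x = ('X : {poly int})%:P. *)
Local Open Scope ring_scope.
Definition xv : {poly {poly int}} := ('X : {poly int})%:P.

Definition genQ (N : nat) : {poly {poly int}} :=
  \sum_(n < N.+1) (cubeQ n)%:P * 'X^n.

(* Denominator 1 - y - (x+1) y^2 (invertible in power series: constant term 1). *)
Definition denom : {poly {poly int}} := 1 - 'X - (xv + 1) * 'X^2.

(* Numerator after multiplying the RHS by denom:
   (2 - y) + ((1+x) y - 1) * denom. *)
Definition numer : {poly {poly int}} := (2%:R - 'X) + ((1 + xv) * 'X - 1) * denom.

(* Main.v *)
Require Import Defs.
From mathcomp Require Import all_boot all_order all_algebra ring.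
Set Implicit Arguments. Unset Strict Implicit. Unset Printing Implicit Defensive.
Import GRing.Theory.


Section SX.
Variable T : finType.
Definition sx (X Y : {set T}) := (X :\: Y) :|: (Y :\: X).
Lemma in_sx (X Y : {set T}) x : (x \in sx X Y) = (x \in X) (+) (x \in Y).
Proof. by rewrite !inE; case: (x \in X); case: (x \in Y). Qed.

Lemma sx_eq (X Y : {set T}) : (forall x, (x \in X) = (x \in Y)) -> X = Y.
Proof. by move=> H; apply/setP=> x; rewrite H. Qed.
End SX.

Lemma omega_adjE n (X Y : {set 'I_n}) : omega_adj X Y = (#|sx X Y| == 1%N).
Proof.
apply/idP/idP.
- case/orP=> /existsP [x /andP [xX /eqP ->]]; apply/cards1P; exists x;
  apply/setP=> y; rewrite in_sx !inE;
  by case: (y =P x) => [->|]; rewrite ?xX //= ?andbF ?addbb ?addbF ?addFb ?andbT //; case: (y \in X).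
- case/cards1P=> x Hx.
  have Hy : forall y, (y \in X) (+) (y \in Y) = (y == x).
    by move=> y; rewrite -in_sx Hx inE.
  apply/orP; case Xx: (x \in X).
  + left; apply/existsP; exists x; rewrite Xx /=; apply/eqP/setP=> y.
    rewrite !inE; have := Hy y; case: (y =P x) => [->|_]; rewrite ?Xx //=.
    * by case: (x \in Y).
    * by case: (y \in X); case: (y \in Y).
  + right; apply/existsP; exists x.
    have Yx : x \in Y by have := Hy x; rewrite Xx eqxx.
    rewrite Yx /=; apply/eqP/setP=> y.
    rewrite !inE; have := Hy y; case: (y =P x) => [->|_]; rewrite ?Xx //=.
    by case: (y \in X); case: (y \in Y).
Qed.

Lemma cube_adjE k (u v : {set 'I_k}) : cube_adj u v = (#|sx u v| == 1%N).
Proof. by []. Qed.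


Definition goodpair n (F A : {set 'I_n}) :=
  [forall x, (x \in F) ==> (x \notin A)] &&
  [forall B : {set 'I_n}, (B \subset A) ==> is_filter (F :|: B)].

Definition Phi n (p : {set 'I_n} * {set 'I_n}) : {set {set 'I_n}} :=
  [set p.1 :|: B | B in powerset p.2].

Lemma Phi_cube n k (F A : {set 'I_n}) : goodpair F A -> #|A| = k ->
  (Phi (F, A) \subset filters n) && induces_cube k (Phi (F, A)).
Proof.
case/andP=> /forallP dFA /forallP fil Hk; apply/andP; split.
  apply/subsetP=> X /imsetP [B]; rewrite inE => BA ->.
  by rewrite inE; exact: (implyP (fil B) BA).
subst k.
pose g (i : 'I_#|A|) : 'I_n := enum_val i.
have ginj : injective g by exact: enum_val_inj.
have gA i : g i \in A by exact: enum_valP.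
have Ag a : a \in A -> exists i, a = g i.
  by move=> aA; exists (enum_rank_in aA a); rewrite /g enum_rankK_in.
have FgA x : x \in F -> x \in A = false.
  by move=> xF; have := implyP (dFA x) xF; case: (x \in A).
have img (u : {set 'I_#|A|}) x : x \in F -> (x \in g @: u) = false.
  move=> xF; apply/negP=> /imsetP [i _ xe]; have := FgA x xF.
  by rewrite xe gA.
apply/existsP; exists [ffun u : {set 'I_#|A|} => F :|: g @: u]; apply/and3P; split.
- apply/injectiveP=> u v; rewrite !ffunE => /setP Huv.
  apply: (imset_inj ginj); apply/setP=> x; have := Huv x; rewrite !inE.
  by case xF: (x \in F) => //=; rewrite !img.
- apply/eqP/setP=> X; rewrite /Phi /=; apply/idP/idP.
  + case/imsetP=> u _ ->; apply/imsetP; exists (g @: u); last by rewrite ffunE.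
    rewrite inE; apply/subsetP=> x /imsetP [i _ ->]; exact: gA.
  + case/imsetP=> B; rewrite inE => BA ->; apply/imsetP.
    exists [set i | g i \in B] => //; rewrite ffunE; congr (_ :|: _).
    apply/setP=> x; apply/idP/imsetP.
    2: by case=> i; rewrite inE => ? ->.
    * move=> xB; have [i xe] := Ag x (subsetP BA x xB).
      by exists i; rewrite // inE -xe.
- apply/forallP=> u; apply/forallP=> v; rewrite omega_adjE cube_adjE !ffunE.
  suff -> : sx (F :|: g @: u) (F :|: g @: v) = g @: sx u v.
    by rewrite card_imset.
  apply/setP=> x; rewrite in_sx !inE.
  case xF: (x \in F) => /=; first by rewrite img.
  apply/idP/imsetP.
  + case xu: (x \in g @: u); case xv: (x \in g @: v) => //= _.
    * case/imsetP: xu => i iu xe; exists i => //; rewrite in_sx iu /=.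
      by apply/negP=> iv; rewrite xe imset_f in xv.
    * case/imsetP: xv => i iv xe; exists i => //; rewrite in_sx iv addbT.
      by apply/negP=> iu; rewrite xe imset_f in xu.
  + case=> i; rewrite in_sx => Hi ->; rewrite !mem_imset //.
Qed.

Lemma in_Phi n (F A X : {set 'I_n}) :
  reflect (exists2 B : {set 'I_n}, B \subset A & X = F :|: B) (X \in Phi (F, A)).
Proof.
apply: (iffP imsetP).
- by case=> B; rewrite inE => ? ->; exists B.
- by case=> B ? ->; exists B; rewrite ?inE.
Qed.

Lemma Phi_inj n : {in [pred p : {set 'I_n} * {set 'I_n} | goodpair p.1 p.2] &,
  injective (@Phi n)}.
Proof.
move=> [F A] [F' A']; rewrite !inE /= => /andP[/forallP d _] /andP[/forallP d' _] E.
have sub1 : forall (F A F' A' : {set 'I_n}), Phi (F, A) = Phi (F', A') -> F' \subset F.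
  move=> F1 A1 F2 A2 E1.
  have : F1 \in Phi (F2, A2) by rewrite -E1; apply/in_Phi; exists set0; rewrite ?sub0set ?setU0.
  by case/in_Phi=> B _ ->; apply: subsetUl.
have EF : F = F' by apply/eqP; rewrite eqEsubset (sub1 _ _ _ _ E) (sub1 _ _ _ _ (esym E)).
subst F'; congr (_, _).
have sub2 : forall (A A' : {set 'I_n}), [forall x, (x \in F) ==> (x \notin A)] ->
    Phi (F, A) = Phi (F, A') -> A \subset A'.
  move=> A1 A2 /forallP d1 E1.
  have : F :|: A1 \in Phi (F, A2) by rewrite -E1; apply/in_Phi; exists A1.
  case/in_Phi=> B BA2 EB; apply/subsetP=> x xA1.
  have : x \in F :|: B by rewrite -EB inE xA1 orbT.
  rewrite inE; case/orP=> [xF|xB]; last exact: (subsetP BA2).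
  by have := implyP (d1 x) xF; rewrite xA1.
apply/eqP; rewrite eqEsubset (sub2 _ _ (introT forallP d) E).
by rewrite (sub2 _ _ (introT forallP d') (esym E)).
Qed.

Lemma xorK3 (a b c : bool) : a = b (+) c -> c = a (+) b.
Proof. by case: a; case: b; case: c. Qed.

Lemma cube_Phi n k (S : {set {set 'I_n}}) : S \subset filters n -> induces_cube k S ->
  exists2 p : {set 'I_n} * {set 'I_n}, goodpair p.1 p.2 && (#|p.2| == k) & S = Phi p.
Proof.
move=> Sfil /existsP [f /and3P [/injectiveP finj /eqP Sim /forallP adj]].
have adj1 u v : #|sx u v| == 1%N -> exists p, forall x, (x \in f u) (+) (x \in f v) = (x == p).
  move=> H; have := eqP (forallP (adj u) v); rewrite omega_adjE cube_adjE H.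
  by case/cards1P=> p Hp; exists p => x; rewrite -in_sx Hp inE.
have sx1 (T : finType) (i : T) (u : {set T}) : i \notin u -> #|sx (i |: u) u| == 1%N.
  move=> iu; apply/cards1P; exists i; apply/setP=> y; rewrite in_sx !inE.
  by case: (y =P i) => [->|] /=; [rewrite (negbTE iu) | case: (y \in u)].
set v0 := f set0.
have : forall i, exists p, forall x, (x \in f [set i]) = (x \in v0) (+) (x == p).
  move=> i; have := sx1 _ i set0; rewrite inE setU0; move/(_ isT) => H; have [p Hp] := adj1 _ _ H.
  by exists p => x; rewrite -Hp; case: (x \in f [set i]); case: (x \in v0).
case/fin_all_exists => g Hg.
have ginj : injective g.
  move=> i j gij; apply/set1_inj/finj; apply/setP=> x; by rewrite !Hg gij.
have L : forall m (u : {set 'I_k}), #|u| = m -> forall i, i \notin u ->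
    forall x, (x \in f (i |: u)) = (x \in f u) (+) (x == g i).
  elim=> [|m IH] u Hu i iu x.
    by move/cards0_eq: Hu => ->; rewrite setU0 Hg.
  have [j ju] : exists j, j \in u.
    by apply/set0Pn; rewrite -card_gt0 Hu.
  set u' := u :\ j.
  have Hm : #|u'| = m by move: Hu; rewrite (cardsD1 j u) ju add1n => -[].
  have iu' : i \notin u' by rewrite !inE negb_and iu orbT.
  have ju' : j \notin u' by rewrite !inE eqxx.
  have Hueq : j |: u' = u by rewrite setD1K.
  have E1 := IH u' Hm i iu'.
  have E2 := IH u' Hm j ju'; rewrite Hueq in E2.
  have ij : i != j by apply: contraNneq iu => ->.
  have [p Hp] := adj1 _ _ (sx1 _ i u iu).
  have Hq0 : #|sx (i |: u) (i |: u')| == 1%N.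
    rewrite -Hueq setUCA; apply: sx1; by rewrite in_setU1 negb_or eq_sym ij ju'.
  have [q Hq] := adj1 _ _ Hq0.
  have key y : (y == g j) (+) (y == p) = (y == g i) (+) (y == q).
    have := Hp y; have := Hq y; rewrite E1 E2.
    case: (y \in f (i |: u)); case: (y \in f u'); case: (y == g j); case: (y == p);
    case: (y == g i); case: (y == q) => //.
  have gij : g i != g j by apply: contra ij => /eqP/ginj ->.
  have pj : p != g j.
    apply/eqP=> pe; have : f (i |: u) = f u'.
      apply/setP=> y; apply/esym; have := Hp y; rewrite pe E2.
      by case: (y \in f (i |: u)); case: (y \in f u'); case: (y == g j).
    move/finj => E; move: ju'; by rewrite -E !inE ju orbT.
  have qe : q = g j.
    have := key (g j); rewrite eqxx eq_sym (negbTE pj) eq_sym (negbTE gij) /=.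
    by move/esym/eqP.
  have pe : p = g i.
    have := key p; rewrite eqxx (negbTE pj) qe /= (negbTE pj) addbF.
    by move/esym/eqP.
  by have := Hp x; rewrite pe; case: (x \in f (i |: u)); case: (x \in f u); case: (x == g i).
have Lf : forall (u : {set 'I_k}) x, (x \in f u) = (x \in v0) (+) (x \in g @: u).
  move=> u; move Hm : #|u| => m; elim: m u Hm => [|m IH] u Hu x.
    by move/cards0_eq: Hu => ->; rewrite imset0 inE addbF.
  have [j ju] : exists j, j \in u.
    by apply/set0Pn; rewrite -card_gt0 Hu.
  set u' := u :\ j.
  have Hm : #|u'| = m by move: Hu; rewrite (cardsD1 j u) ju add1n => -[].
  have ju' : j \notin u' by rewrite !inE eqxx.
  have Hueq : j |: u' = u by rewrite setD1K.
  rewrite -Hueq (L m u' Hm j ju' x) IH // imsetU1 in_setU1.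
  case: (x =P g j) => [->|_]; last by rewrite /= !addbF.
  have -> : (g j \in g @: u') = false.
    by apply/negP => /imsetP [i iu /ginj ei]; move: ju'; rewrite ei iu.
  by rewrite /= addbF.
set A := g @: [set: 'I_k].
set F := v0 :\: A.
have inA x : reflect (exists i, x = g i) (x \in A).
  apply: (iffP imsetP); [by case=> i _ ->; exists i | by case=> i ->; exists i].
have gA (u : {set 'I_k}) x : x \in g @: u -> x \in A.
  by case/imsetP=> i _ ->; apply/inA; exists i.
have SPhi : S = Phi (F, A).
  apply/setP=> X; rewrite -Sim; apply/imsetP/in_Phi.
  - case=> u _ ->; exists (sx (g @: u) (v0 :&: A)).
      apply/subsetP=> x; rewrite in_sx !inE.
      case xu: (x \in g @: u); first by rewrite (gA _ _ xu).
      by case/andP.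
    apply/setP=> x; rewrite Lf !inE; case xu: (x \in g @: u); [rewrite (gA u x xu) |]; by case: (x \in A); case: (x \in v0).
  - case=> B BA ->; exists [set i | g i \in sx B (v0 :&: A)] => //.
    apply/setP=> x; rewrite Lf.
    have -> : (x \in g @: [set i | g i \in sx B (v0 :&: A)]) = (x \in sx B (v0 :&: A)).
      apply/imsetP/idP; first by case=> i; rewrite inE => ? ->.
      move=> xs; have : x \in A.
        by move: xs; rewrite in_sx !inE; case xB: (x \in B) => /=;
          [rewrite (subsetP BA _ xB) | case/andP].
      by case/inA=> i xe; exists i => //; rewrite inE -xe.
    rewrite !inE; case xB: (x \in B); [rewrite (subsetP BA x xB) |];
      by case: (x \in A); case: (x \in v0).
exists (F, A); last by [].
rewrite /= /goodpair -andbA; apply/and3P; split.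
- by apply/forallP=> x; apply/implyP; rewrite inE => /andP [].
- apply/forallP=> B; apply/implyP=> BA.
  have : F :|: B \in S by rewrite SPhi; apply/in_Phi; exists B.
  by move/(subsetP Sfil); rewrite inE.
- by rewrite card_imset // cardsT card_ord.
Qed.

Lemma q_pairs n k :
  q n k = #|[set p : {set 'I_n} * {set 'I_n} | goodpair p.1 p.2 && (#|p.2| == k)]|.
Proof.
rewrite /q.
have -> : [set S : {set {set 'I_n}} | (S \subset filters n) && induces_cube k S] =
    (@Phi n) @: [set p : {set 'I_n} * {set 'I_n} | goodpair p.1 p.2 && (#|p.2| == k)].
  apply/setP=> S; rewrite inE; apply/idP/imsetP.
  - by case/andP=> Sf Sc; have [p Hp ->] := cube_Phi Sf Sc; exists p; rewrite ?inE.
  - case=> [[F A]]; rewrite inE => /andP [gp /eqP hk] ->; exact: Phi_cube gp hk.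
apply: card_in_imset => p1 p2; rewrite !inE => /andP [h1 _] /andP [h2 _].
by apply: Phi_inj; rewrite inE.
Qed.


Definition upe (i : nat) := (2 <= i) && ~~ odd i.

Lemma cover_nat (a b : nat) :
  [|| (a == 1) && (b == 0), (a == 2) && (b == 1),
      [&& 2 <= a, b == a.+1 & ~~ odd a] | [&& 2 <= b, a == b.+1 & odd b]] =
  ((b == a.+1) && upe a) || ((a == b.+1) && ~~ upe b).
Proof.
rewrite /upe.
case: (b =P a.+1) => [->|nb] /=.
  rewrite (_ : (a == a.+2) = false); last by elim: a.
  by rewrite andbF !orbF; case: a => [|[|[|a]]] //=; rewrite ?andbF ?orbF.
rewrite andbF /=.
case: (a =P b.+1) => [->|na] /=.
  by case: b {nb} => [|[|b]] //=; rewrite ?negbK ?andbF ?orbF.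
rewrite !andbF !orbF.
apply/negP=> /orP [/andP [/eqP a1 /eqP b0]|/andP [/eqP a2 /eqP b1]]; subst; auto.
Qed.

Lemma coverE n (a b : 'I_n) :
  xi_cover a b = ((val b == (val a).+1) && upe a) || ((val a == (val b).+1) && ~~ upe b).
Proof. exact: cover_nat. Qed.

Lemma cover_neq n (a b : 'I_n) : xi_cover a b -> a != b.
Proof.
rewrite coverE => /orP [/andP [e _]|/andP [e _]]; apply/eqP=> ab; subst;
  by move: e; rewrite eqn_leq ltnn andbF.
Qed.

Lemma filter_cover n (X : {set 'I_n}) :
  is_filter X = [forall a, forall b, xi_cover a b ==> (a \in X) ==> (b \in X)].
Proof.
apply/forallP/forallP=> H a; apply/forallP=> b.
- apply/implyP=> ab; apply/implyP=> aX; apply: (implyP (forallP (H a) b)).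
  by rewrite aX /xi_le connect1.
- apply/implyP=> /andP [aX]; rewrite /xi_le => /connectP [p pth ->].
  elim: p a aX pth => //= c p IH a aX /andP [ac pth]; apply: IH pth.
  exact: (implyP (implyP (forallP (H a) c) ac) aX).
Qed.

Definition localc n (F A : {set 'I_n}) :=
  [forall a, forall b, xi_cover a b ==> ((a \in F) || (a \in A)) ==> (b \in F)].

Lemma goodpairE n (F A : {set 'I_n}) :
  goodpair F A = [forall x, (x \in F) ==> (x \notin A)] && localc F A.
Proof.
rewrite /goodpair; congr (_ && _); apply/forallP/forallP.
- move=> H a; apply/forallP=> b; apply/implyP=> ab; apply/implyP=> /orP [aF|aA].
  + have := implyP (H set0) (sub0set A); rewrite setU0 filter_cover.
    by move/forallP/(_ a)/forallP/(_ b); rewrite ab aF.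
  + have := implyP (H [set a]); rewrite sub1set aA => /(_ isT).
    rewrite filter_cover => /forallP/(_ a)/forallP/(_ b); rewrite ab !inE eqxx orbT /=.
    by case/orP=> // /eqP ba; move: (cover_neq ab); rewrite ba eqxx.
- move=> H B; apply/implyP=> BA; rewrite filter_cover; apply/forallP=> a; apply/forallP=> b.
  apply/implyP=> ab; rewrite !inE; apply/implyP=> aFB.
  have : (a \in F) || (a \in A) by case/orP: aFB => [->|/(subsetP BA) ->] //; rewrite orbT.
  by move/(implyP (implyP (forallP (H a) b) ab)) ->.
Qed.

Definition inN n (X : {set 'I_n}) (i : nat) : bool :=
  [exists j : 'I_n, (val j == i) && (j \in X)].

Lemma inN_ord n (X : {set 'I_n}) (j : 'I_n) : inN X j = (j \in X).
Proof.
apply/existsP/idP.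
- by case=> j' /andP [/eqP /val_inj -> ].
- by move=> jX; exists j; rewrite eqxx.
Qed.

Lemma inN_big n (X : {set 'I_n}) (i : nat) : n <= i -> inN X i = false.
Proof.
move=> ni; apply/existsP=> [[j /andP [/eqP e _]]].
by move: (ltn_ord j); rewrite e ltnNge ni.
Qed.

Definition colat n (F A : {set 'I_n}) (i : nat) : nat :=
  if inN F i then 2 else if inN A i then 1 else 0.

Definition edge_ok (up : bool) (p c : nat) :=
  if up then (p == 0) || (c == 2) else (c == 0) || (p == 2).

Definition validpair n (F A : {set 'I_n}) :=
  all (fun i => ~~ (inN F i && inN A i)) (iota 0 n) &&
  all (fun i => edge_ok (upe i) (colat F A i) (colat F A i.+1)) (iota 0 n.-1).

Lemma lt_pred (i n : nat) : i.+1 < n -> i < n.-1.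
Proof. by case: n. Qed.

Lemma goodpair_valid n (F A : {set 'I_n}) : goodpair F A = validpair F A.
Proof.
rewrite goodpairE /validpair; congr (_ && _).
  apply/forallP/allP.
  - move=> H i; rewrite mem_iota add0n => /andP [_ lt].
    rewrite -[i]/(val (Ordinal lt)) !inN_ord; have := H (Ordinal lt).
    by case: (_ \in F); case: (_ \in A).
  - move=> H x; have := H x; rewrite mem_iota add0n ltn_ord !inN_ord => /(_ isT).
    by case: (_ \in F); case: (_ \in A).
have colE (a : 'I_n) : colat F A a = if a \in F then 2 else if a \in A then 1 else 0.
  by rewrite /colat !inN_ord.
apply/forallP/allP.
- move=> H i; rewrite mem_iota add0n => /andP [_ lt].
  have lt1 : i < n by apply: leq_trans lt (leq_pred n).
  have lt2 : i.+1 < n by move: lt; case: (n) => //.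
  rewrite -[i]/(val (Ordinal lt1)) -[i.+1]/(val (Ordinal lt2)) !colE.
  case up: (upe i); rewrite /edge_ok /=.
  + have := implyP (forallP (H (Ordinal lt1)) (Ordinal lt2)); rewrite coverE /= eqxx up /=.
    move/(_ isT).
    by do ! case: (_ \in _).
  + have := implyP (forallP (H (Ordinal lt2)) (Ordinal lt1)); rewrite coverE /= eqxx up /= orbT.
    move/(_ isT).
    by do ! case: (_ \in _).
- move=> H a; apply/forallP=> b; apply/implyP; rewrite coverE.
  case/orP=> /andP [/eqP e up].
  + have : val a \in iota 0 n.-1.
      by rewrite mem_iota add0n; apply: lt_pred; rewrite -e; exact: ltn_ord.
    move/H; rewrite -e !colE /edge_ok up.
    by do ! case: (_ \in _).
  + have : val b \in iota 0 n.-1.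
      by rewrite mem_iota add0n; apply: lt_pred; rewrite -e; exact: ltn_ord.
    move/H; rewrite -e !colE /edge_ok (negbTE up).
    by do ! case: (_ \in _).
Qed.

Local Open Scope ring_scope.


Definition extS n (Y : {set 'I_n}) (b : bool) : {set 'I_n.+1} :=
  (widen_ord (leqnSn n)) @: Y :|: (if b then [set ord_max] else set0).

Lemma widen_neq_max n (i : 'I_n) : (widen_ord (leqnSn n) i == ord_max) = false.
Proof. by apply/negP=> /eqP/(congr1 val) /= e; move: (ltn_ord i); rewrite e ltnn. Qed.

Lemma in_extS_widen n (Y : {set 'I_n}) b i : (widen_ord (leqnSn n) i \in extS Y b) = (i \in Y).
Proof.
rewrite /extS inE; case: b; rewrite ?inE ?widen_neq_max ?orbF;
  apply/imsetP/idP => [[j jY /(congr1 val) /= /val_inj ->] //|]; by exists i.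
Qed.

Lemma in_extS_max n (Y : {set 'I_n}) b : (ord_max \in extS Y b) = b.
Proof.
rewrite /extS inE; case: b; rewrite ?inE ?eqxx ?orbT //= orbF.
by apply/imsetP=> [[j _ /esym/eqP]]; rewrite widen_neq_max.
Qed.

Lemma ord_split n (x : 'I_n.+1) :
  (exists i : 'I_n, x = widen_ord (leqnSn n) i) \/ x = ord_max.
Proof.
case: (ltnP x n) => lt; [left; exists (Ordinal lt) | right]; apply: val_inj => //=.
by apply/eqP; rewrite eqn_leq lt -ltnS ltn_ord.
Qed.

Lemma sum_ext (R : nmodType) n (phi : {set 'I_n.+1} -> R) :
  \sum_(X : {set 'I_n.+1}) phi X = \sum_(Y : {set 'I_n}) \sum_(b : bool) phi (extS Y b).
Proof.
rewrite pair_big /=.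
pose h (p : {set 'I_n} * bool) := extS p.1 p.2.
pose h' (X : {set 'I_n.+1}) := ([set i : 'I_n | widen_ord (leqnSn n) i \in X], ord_max \in X).
rewrite (reindex h) //; exists h' => [[Y b] _ | X _].
- by rewrite /h /h' in_extS_max; congr (_, _); apply/setP=> i; rewrite inE in_extS_widen.
- apply/setP=> x; rewrite /h /h' /=; case: (ord_split x) => [[i ->]|->].
  + by rewrite in_extS_widen inE.
  + by rewrite in_extS_max.
Qed.

Lemma inN_extS n (Y : {set 'I_n}) b i :
  inN (extS Y b) i = if (i < n)%N then inN Y i else (i == n) && b.
Proof.
case: (ltnP i n) => lt.
- transitivity (widen_ord (leqnSn n) (Ordinal lt) \in extS Y b).
    exact: (inN_ord (extS Y b) (widen_ord _ (Ordinal lt))).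
  by rewrite in_extS_widen -(inN_ord Y (Ordinal lt)).
- case: (i =P n) => [->|ne].
  + by rewrite -[n]/(val (@ord_max n)) inN_ord in_extS_max.
  + by rewrite inN_big //; rewrite ltn_neqAle eq_sym lt andbT; apply/eqP.
Qed.

Lemma widen_inj n : injective (widen_ord (leqnSn n)).
Proof. by move=> i j e; apply: val_inj; exact: (congr1 val e). Qed.

Lemma card_extS n (Y : {set 'I_n}) b : #|extS Y b| = (#|Y| + b)%N.
Proof.
rewrite /extS; case: b.
- rewrite setUC cardsU1 card_imset ?addn1 ?add1n //; last exact: widen_inj.
  suff -> : ord_max \notin [set widen_ord (leqnSn n) x | x in Y] by [].
  by apply/imsetP=> [[j _ /esym/eqP]]; rewrite widen_neq_max.
- by rewrite setU0 card_imset ?addn0 //; exact: widen_inj.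
Qed.

Definition col (b b' : bool) : nat := if b then 2 else if b' then 1 else 0.

Lemma colat_ext n (Y Z : {set 'I_n}) b b' i :
  colat (extS Y b) (extS Z b') i =
  if (i < n)%N then colat Y Z i else if i == n then col b b' else 0%N.
Proof.
rewrite /colat !inN_extS /col; case: (ltnP i n) => // _.
by case: (i == n); case: b; case: b'.
Qed.

Definition okext n p c := (n == 0)%N || edge_ok (upe n.-1) p c.

Lemma iota_r n : iota 0 n.+1 = iota 0 n ++ [:: n].
Proof. by rewrite -addn1 iotaD. Qed.

Lemma valid_ext n (Y Z : {set 'I_n}) b b' :
  validpair (extS Y b) (extS Z b') =
  [&& validpair Y Z, ~~ (b && b') & okext n (colat Y Z n.-1) (col b b')].
Proof.
rewrite /validpair iota_r all_cat [all _ [:: n]]/= andbT !inN_extS ltnn eqxx [n.+1.-1]/=.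
have -> : all (fun i => ~~ (inN (extS Y b) i && inN (extS Z b') i)) (iota 0 n) =
          all (fun i => ~~ (inN Y i && inN Z i)) (iota 0 n).
  apply: eq_in_all => i; rewrite mem_iota add0n => /andP [_ lt].
  by rewrite !inN_extS lt.
set P1 := all _ (iota 0 n).
case: n Y Z P1 => [|m] Y Z P1.
  by rewrite /okext /=; case: P1; case: b; case: b'.
rewrite [m.+1.-1]/= iota_r all_cat [all _ [:: m]]/= andbT.
have -> : all (fun i => edge_ok (upe i) (colat (extS Y b) (extS Z b') i)
                                     (colat (extS Y b) (extS Z b') i.+1)) (iota 0 m) =
          all (fun i => edge_ok (upe i) (colat Y Z i) (colat Y Z i.+1)) (iota 0 m).
  apply: eq_in_all => i; rewrite mem_iota add0n => /andP [_ lt].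
  by rewrite !colat_ext !ltnS (ltnW lt) lt.
rewrite !colat_ext ltnSn ltnn eqxx /okext /=.
by case: P1; case: (all _ _); case: b; case: b'.
Qed.


Definition Ssum n (P : pred nat) : {poly int} :=
  \sum_(Y : {set 'I_n}) \sum_(Z : {set 'I_n})
     ((validpair Y Z && P (colat Y Z n.-1))%:R * 'X^#|Z|).

Lemma S_rec n c : (c < 3)%N ->
  Ssum n.+1 (pred1 c) = 'X^(c == 1%N) * Ssum n (fun p => okext n p c).
Proof.
move=> c3; rewrite /Ssum sum_ext mulr_sumr; apply: eq_bigr => Y _.
rewrite exchange_big /= sum_ext mulr_sumr; apply: eq_bigr => Z _.
rewrite !big_bool !valid_ext !colat_ext ltnn eqxx !card_extS /col /=.
set p := colat Y Z n.-1; set ok := okext n p.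
case: c c3 => [|[|[|c]]] // _ /=;
  case: (validpair Y Z); case: (ok 0%N); case: (ok 1%N); case: (ok 2%N);
  rewrite /= ?addn0 ?addn1 ?exprS ?expr0 ?mul1r ?mulr1 ?mulr0 ?mul0r ?addr0 ?add0r.
all: by rewrite ?mulr0.
Qed.

Lemma colat_lt3 n (Y Z : {set 'I_n}) i : (colat Y Z i < 3)%N.
Proof. by rewrite /colat; case: (inN Y i); case: (inN Z i). Qed.

Lemma S_ext n (P Q : pred nat) : (forall p, (p < 3)%N -> P p = Q p) -> Ssum n P = Ssum n Q.
Proof.
move=> H; apply: eq_bigr => Y _; apply: eq_bigr => Z _.
by rewrite H // colat_lt3.
Qed.

Lemma S_or n (P Q : pred nat) : (forall p, ~~ (P p && Q p)) ->
  Ssum n (fun p => P p || Q p) = Ssum n P + Ssum n Q.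
Proof.
move=> H; rewrite /Ssum -big_split; apply: eq_bigr => Y _.
  rewrite -big_split; apply: eq_bigr => Z _; rewrite /= -mulrDl.
have := H (colat Y Z n.-1).
by case: (validpair Y Z); case: (P _); case: (Q _); rewrite /= ?add0r ?addr0.
Qed.

Lemma S0 (P : pred nat) : Ssum 0 P = (P 0%N)%:R.
Proof.
have E : forall Y : {set 'I_0}, Y = set0 by move=> Y; apply/setP=> [[]].
rewrite /Ssum (big_pred1 set0) => [|Y]; last by rewrite (E Y) /= eqxx.
rewrite (big_pred1 set0) => [|Y]; last by rewrite (E Y) /= eqxx.
rewrite cards0 expr0 mulr1.
have -> : colat (set0 : {set 'I_0}) set0 0 = 0%N by rewrite /colat !inN_big.
by [].
Qed.

Definition Tsum n := Ssum n predT.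

Lemma T_split n : Tsum n = Ssum n (pred1 0%N) + Ssum n (pred1 1%N) + Ssum n (pred1 2%N).
Proof.
rewrite -!S_or; first (apply: S_ext => p; case: p => [|[|[|]]] //).
- by case=> [|[|[|]]].
- by case=> [|[|[|]]].
Qed.

Lemma step0 c : (c < 3)%N -> Ssum 1 (pred1 c) = 'X^(c == 1%N) * Tsum 0.
Proof. by move=> c3; rewrite S_rec //; congr (_ * _); apply: S_ext. Qed.

Lemma step_down n : (0 < n)%N -> upe n.-1 = false ->
  [/\ Ssum n.+1 (pred1 0%N) = Tsum n, Ssum n.+1 (pred1 1%N) = 'X * Ssum n (pred1 2%N)
    & Ssum n.+1 (pred1 2%N) = Ssum n (pred1 2%N)].
Proof.
move=> n0 up; have nz : (n == 0%N) = false by case: n n0 {up}.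
rewrite !S_rec // /= ?expr0 ?expr1 ?mul1r; split.
- by apply: S_ext => p _; rewrite /okext nz up.
- by congr (_ * _); apply: S_ext => p _; rewrite /okext nz up.
- by apply: S_ext => p _; rewrite /okext nz up.
Qed.

Lemma step_up n : (0 < n)%N -> upe n.-1 = true ->
  [/\ Ssum n.+1 (pred1 0%N) = Ssum n (pred1 0%N), Ssum n.+1 (pred1 1%N) = 'X * Ssum n (pred1 0%N)
    & Ssum n.+1 (pred1 2%N) = Tsum n].
Proof.
move=> n0 up; have nz : (n == 0%N) = false by case: n n0 {up}.
rewrite !S_rec // /= ?expr0 ?expr1 ?mul1r; split.
- by apply: S_ext => p _; rewrite /okext nz up /= orbF.
- by congr (_ * _); apply: S_ext => p _; rewrite /okext nz up /= orbF.
- by apply: S_ext => p _; rewrite /okext nz up /= orbT.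
Qed.

Lemma T_rec n : (2 <= n)%N -> Tsum n.+2 = Tsum n.+1 + (1 + 'X) * Tsum n.
Proof.
move=> n2.
have u1 : upe n.-1 = ~~ upe n.
  rewrite /upe; case: n n2 => [|[|[|n]]] //= _.
  by rewrite negbK; case: (odd n).
have n0 : (0 < n)%N by apply: leq_trans n2.
have n10 : (0 < n.+1)%N by [].
case E: (upe n).
- have [a1 b1 d1] := step_down n0 (ltac:(by rewrite u1 E)).
  have [a2 b2 d2] := step_up n10 E.
  rewrite T_split a2 b2 d2 a1 T_split; ring.
- have [a1 b1 d1] := step_up n0 (ltac:(by rewrite u1 E)).
  have [a2 b2 d2] := step_down n10 E.
  rewrite T_split a2 b2 d2 d1 [Tsum n.+1]T_split a1 b1 d1; ring.
Qed.

Lemma T_vals : [/\ Tsum 0 = 1, Tsum 1 = 2%:R + 'X, Tsum 2 = 3%:R + 2%:R * 'X & Tsum 3 = 4%:R + 3%:R * 'X].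
Proof.
have t0 : Tsum 0 = 1 by rewrite /Tsum S0.
have [a1 b1 d1] : [/\ Ssum 1 (pred1 0%N) = 1, Ssum 1 (pred1 1%N) = 'X & Ssum 1 (pred1 2%N) = 1].
  by rewrite !step0 // t0 /= ?expr0 ?expr1 ?mulr1.
have t1 : Tsum 1 = 2%:R + 'X by rewrite T_split a1 b1 d1; ring.
have [a2 b2 d2] := @step_down 1 isT erefl.
have t2 : Tsum 2 = 3%:R + 2%:R * 'X by rewrite T_split a2 b2 d2 t1 d1; ring.
have [a3 b3 d3] := @step_down 2 isT erefl.
have t3 : Tsum 3 = 4%:R + 3%:R * 'X by rewrite T_split a3 b3 d3 t2 d2 d1; ring.
by split.
Qed.


Lemma cubeQ_T n : cubeQ n = Tsum n.
Proof.
apply/polyP=> k; rewrite coef_poly /Tsum /Ssum coef_sum.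
have -> : \sum_(Y : {set 'I_n}) (\sum_(Z : {set 'I_n})
     (validpair Y Z && predT (colat Y Z n.-1))%:R * 'X^#|Z|)`_k =
   \sum_(Y : {set 'I_n}) \sum_(Z : {set 'I_n}) ((validpair Y Z && (#|Z| == k))%:R : int).
  apply: eq_bigr => Y _; rewrite coef_sum; apply: eq_bigr => Z _.
  rewrite mulr_natl coefMn coefXn /= andbT eq_sym; case: (validpair Y Z) => /=; [by rewrite mulr1n | by rewrite mulr0n].
case: ltnP => kn.
- rewrite q_pairs cardsE -sum1_card big_mkcond natr_sum pair_big /=.
  apply: eq_bigr => [[Y Z]] _; rewrite unfold_in /= goodpair_valid.
  by case: (_ && _).
- apply/esym; apply: big1 => Y _; apply: big1 => Z _.
  suff -> : (#|Z| == k) = false by rewrite andbF.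
  apply/negP=> /eqP e; move: (max_card Z); rewrite e card_ord.
  by rewrite leqNgt kn.
Qed.

Lemma coef_genQ N i : (genQ N)`_i = if (i <= N)%N then cubeQ i else 0.
Proof.
rewrite /genQ coef_sum.
under eq_bigr do rewrite coefCM coefXn.
case: leqP => iN.
- rewrite (bigD1 (Ordinal (iN : (i < N.+1)%N))) //= eqxx mulr1 big1 ?addr0 //.
  move=> j /negP ji; case: (i =P j) => [e|_]; last by rewrite mulr0.
  by exfalso; apply: ji; apply/eqP/val_inj.
- apply: big1 => j _; case: (i =P j) => [e|_]; last by rewrite mulr0.
  by move: (ltn_ord j); rewrite -e ltnS leqNgt iN.
Qed.

Lemma cQ_rec n : (2 <= n)%N -> cubeQ n.+2 = cubeQ n.+1 + (1 + 'X) * cubeQ n.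
Proof. by move=> n2; rewrite !cubeQ_T T_rec. Qed.

Theorem main_thm : forall N k : nat, (k <= N)%N -> (genQ N * denom)`_k = numer`_k.
Proof.
move=> N k kN.
have -> : genQ N * denom = genQ N - genQ N * 'X - ('X + 1)%:P * (genQ N * 'X^2).
  rewrite /denom /xv polyCD polyC1; ring.
have -> : numer = 1 + (1 + 'X)%:P * 'X - ((1 + 'X) ^+ 2)%:P * 'X^3.
  rewrite /numer /denom /xv rmorphXn !rmorphD rmorph1 /=; ring.
rewrite !coefB !coefD coefMX !coefCM coefMXn !coef_genQ coef1 coefXn ?coefX ?coefC.
have [c0 c1 c2 c3] := T_vals.
rewrite -!cubeQ_T in c0 c1 c2 c3.
case: k kN => [|[|[|[|k]]]] kN /=; rewrite ?(leq_trans _ kN) ?subn2 //=.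
- rewrite c0; ring.
- rewrite c0 c1; ring.
- rewrite c0 c1 c2; ring.
- rewrite c1 c2 c3; ring.
- rewrite cQ_rec //; ring.
all: by rewrite !ltnS leqW ?leqnSn.
Qed.

Unset Implicit Arguments.

Theorem mainTheorem10 :
  forall N k : nat, (k <= N)%N -> (genQ N * denom)`_k = numer`_k.
Proof. exact: main_thm. Qed.
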